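(* Let $K\ge 2$ and let the global alphabet be $\mathcal{A}=[K]=\{1,\dots,K\}$. Let $\Omega_1,\Omega_2\subseteq[K]$ be the (random) sets of parties $P_1$ and $P_2$, and assume $|\Omega_2|$ is fixed and publicly known. Consider any protocol in which $P_2$ sends queries $Q^{[\Omega_2]}_{n}$ to the $N_1$ databases of $P_1$, and database $n$ returns an answer $A^{[\Omega_2]}_n$ satisfying $H(A^{[\Omega_2]}_n\mid Q^{[\Omega_2]}_n,\Omega_1,\mathcal{R}_S)=0$, where $\mathcal{R}_S$ is common randomness shared by $P_1$'s databases. Define the one-symbol messages $W_k=\mathbf{1}\{k\in\Omega_1\}$, $k\in[K]$ (so $L=1$), and the desired index set $\Omega=[K]\setminus\Omega_2$, so $|\Omega|=P=K-|\Omega_2|$. Then the protocol satisfies the three PSU constraints (i) PSU reliability: $H(\Omega_1\cup\Omega_2\mid Q^{[\mathcal{P}_2]}_{[N_1]},A^{[\mathcal{P}_2]}_{[N_1]},\Omega_2)=0$ for every realization $\mathcal{P}_2$; (ii) $P_2$ privacy: $I(\Omega_2;Q^{[\Omega_2]}_{n},A^{[\Omega_2]}_{n},\Omega_1,\mathcal{R}_S)=0$ for all $n\in[N_1]$; (iii) $P_1$ privacy: $I(E_{1,\Omega_2};Q^{[\mathcal{P}_2]}_{[N_1]},A^{[\mathcal{P}_2]}_{[N_1]},\Omega_2)=0$ for every realization $\mathcal{P}_2$, where $E_{1,\Omega_2}=(\mathbf{1}\{k\in\Omega_1\})_{k\in\Omega_2}$; if and only if, viewed as a multi-message symmetric PIR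 protocol with messages $W_{[K]}$ and desired set $\Omega$, it satisfies (i') MM-SPIR reliability: $H(W_{\mathcal{P}}\mid Q_{[N_1]}^{[\mathcal{P}]},A_{[N_1]}^{[\mathcal{P}]},\mathcal{P})=0$ for every realization $\mathcal{P}$ of $\Omega$; (ii') user privacy: $I(\Omega;Q_n^{[\Omega]},A_n^{[\Omega]},W_{[K]},\mathcal{R}_S)=0$ for all $n$; (iii') database privacy: $I(W_{[K]\setminus\mathcal{P}};Q_{[N_1]}^{[\mathcal{P}]},A_{[N_1]}^{[\mathcal{P}]},\mathcal{P})=0$ for every realization $\mathcal{P}$. In this sense PSU is equivalent to MM-SPIR with $L=1$ and $P=|\mathcal{A}|-|\Omega_2|$.
   Context: Notation: $[Z]=\{1,\dots,Z\}$. For a set $\mathcal{S}$ of indices, $W_{\mathcal{S}}=\{W_k:k\in\mathcal{S}\}$. Party $P_2$ (the querying party) generates queries without knowledge of $\Omega_1$; $P_1$'s $N_1$ databases store $\Omega_1$ in replicated form, do not collude, and share common randomness $\mathcal{R}_S$ unknown to $P_2$. *)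

(* Defs.v *)
From HB Require Import structures.
From mathcomp Require Import all_boot all_order all_algebra.
From mathcomp Require Import reals exp.
Set Implicit Arguments. Unset Strict Implicit. Unset Printing Implicit Defensive.
Import Order.TTheory GRing.Theory Num.Theory.
Local Open Scope ring_scope.

(* Finite probability space: sample space T (finType) with weights p : T -> R.
   Random variables are functions T -> U with U a finType. *)
Section Info.
Variables (R : realType) (T : finType).

Definition Pr (p : T -> R) (E : pred T) : R := \sum_(t | E t) p t.

(* the conditional distribution given the event E (assumed of positive probability) *)
Definition condp (p : T -> R) (E : pred T) : T -> R :=
  fun t => if E t then p t / Pr p E else 0.

Definition pmf (U : finType) (p : T -> R) (X : T -> U) (u : U) : R :=
  Pr p [pred t | X t == u].

Definition xlog (a b : R) : R := if a == 0 then 0 else a * ln (a / b).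

Definition entropy (U : finType) (p : T -> R) (X : T -> U) : R :=
  - \sum_(u : U) xlog (pmf p X u) 1.

Definition cond_entropy (U V : finType) (p : T -> R) (X : T -> U) (Y : T -> V) : R :=
  - \sum_(u : U) \sum_(v : V)
      xlog (pmf p (fun t => (X t, Y t)) (u, v)) (pmf p Y v).

Definition mutual_info (U V : finType) (p : T -> R) (X : T -> U) (Y : T -> V) : R :=
  \sum_(u : U) \sum_(v : V)
      xlog (pmf p (fun t => (X t, Y t)) (u, v)) (pmf p X u * pmf p Y v).
End Info.

(* W_S : the sub-tuple (w_k)_{k in S} of w, encoded as a function that is
   [None] outside S (S may itself be random). *)
Definition restr (K : nat) (S : {set 'I_K}) (w : {ffun 'I_K -> bool})
  : {ffun 'I_K -> option bool} :=
  [ffun k => if k \in S then Some (w k) else None].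

(* Main.v *)
Require Import Defs.
From HB Require Import structures.
From mathcomp Require Import all_boot all_order all_algebra.
From mathcomp Require Import reals exp.
From Stdlib Require Import FunctionalExtensionality.
Set Implicit Arguments. Unset Strict Implicit.
Import Order.TTheory GRing.Theory Num.Theory.
Local Open Scope ring_scope.

Section Gen.
Variables (R : realType) (T : finType).

Lemma xlogE (a b : R) : xlog a b = a * ln (a / b).
Proof. by rewrite /xlog; case: eqP => [->|]; rewrite ?mul0r. Qed.

Lemma sum_xlog (U : finType) (p : T -> R) (X : T -> U) (c : U -> R) :
  \sum_(u : U) xlog (pmf p X u) (c u) =
  \sum_(t : T) p t * ln (Pr p [pred t' | X t' == X t] / c (X t)).
Proof.
rewrite (partition_big X xpredT) //=; apply: eq_bigr => u _.
rewrite xlogE /pmf /Pr big_distrl /=; apply: eq_big => [t|t /eqP ->] //.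
Qed.

Lemma cond_entropyE (U V : finType) (p : T -> R) (X : T -> U) (Y : T -> V) :
  cond_entropy p X Y = - \sum_(t : T) p t *
    ln (Pr p [pred t' | (X t', Y t') == (X t, Y t)] / Pr p [pred t' | Y t' == Y t]).
Proof.
rewrite /cond_entropy pair_big /=.
rewrite (eq_bigr (fun w => xlog (pmf p (fun t => (X t, Y t)) w) (pmf p Y w.2))); last by case.
by rewrite sum_xlog.
Qed.

Lemma mutual_infoE (U V : finType) (p : T -> R) (X : T -> U) (Y : T -> V) :
  mutual_info p X Y = \sum_(t : T) p t *
    ln (Pr p [pred t' | (X t', Y t') == (X t, Y t)] /
        (Pr p [pred t' | X t' == X t] * Pr p [pred t' | Y t' == Y t])).
Proof.
rewrite /mutual_info pair_big /=.
rewrite (eq_bigr (fun w => xlog (pmf p (fun t => (X t, Y t)) w) (pmf p X w.1 * pmf p Y w.2))); last by case.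
by rewrite sum_xlog.
Qed.

Definition sameP (p : T -> R) {U U' : finType} (X : T -> U) (X' : T -> U') :=
  forall t t', p t != 0 -> p t' != 0 -> (X t' == X t) = (X' t' == X' t).

Lemma Pr_same (p : T -> R) (U U' : finType) (X : T -> U) (X' : T -> U') t :
  sameP p X X' -> p t != 0 ->
  Pr p [pred t' | X t' == X t] = Pr p [pred t' | X' t' == X' t].
Proof.
move=> H pt; rewrite /Pr big_mkcond [RHS]big_mkcond; apply: eq_bigr => t' _ /=.
by have [->|/(H t t' pt) ->] := eqVneq (p t') 0; rewrite ?if_same.
Qed.

Lemma sameP_pair (p : T -> R) (U U' V V' : finType) (X : T -> U) (X' : T -> U')
  (Y : T -> V) (Y' : T -> V') :
  sameP p X X' -> sameP p Y Y' ->
  sameP p (fun t => (X t, Y t)) (fun t => (X' t, Y' t)).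
Proof. by move=> hX hY t t' pt pt'; rewrite !xpair_eqE hX // hY. Qed.

Lemma ce_same (p : T -> R) (U U' V V' : finType) (X : T -> U) (X' : T -> U')
  (Y : T -> V) (Y' : T -> V') :
  sameP p X X' -> sameP p Y Y' -> cond_entropy p X Y = cond_entropy p X' Y'.
Proof.
move=> hX hY; rewrite !cond_entropyE; congr (- _); apply: eq_bigr => t _.
have [->|pt] := eqVneq (p t) 0; first by rewrite !mul0r.
rewrite (Pr_same (sameP_pair hX hY) pt) (Pr_same hY pt) //.
Qed.

Lemma mi_same (p : T -> R) (U U' V V' : finType) (X : T -> U) (X' : T -> U')
  (Y : T -> V) (Y' : T -> V') :
  sameP p X X' -> sameP p Y Y' -> mutual_info p X Y = mutual_info p X' Y'.
Proof.
move=> hX hY; rewrite !mutual_infoE; apply: eq_bigr => t _.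
have [->|pt] := eqVneq (p t) 0; first by rewrite !mul0r.
by rewrite (Pr_same (sameP_pair hX hY) pt) (Pr_same hY pt) (Pr_same hX pt).
Qed.

Lemma condp_supp (p : T -> R) (E : pred T) t : condp p E t != 0 -> E t.
Proof. by rewrite /condp; case: (E t); rewrite ?eqxx. Qed.

Lemma condp_ext (p : T -> R) (E E' : pred T) : E =1 E' -> condp p E = condp p E'.
Proof.
move=> h; apply: functional_extensionality => t.
by rewrite /condp h /Pr (eq_bigl _ _ h).
Qed.

Lemma Pr_ext (p : T -> R) (E E' : pred T) : E =1 E' -> Pr p E = Pr p E'.
Proof. by move=> h; rewrite /Pr (eq_bigl _ _ h). Qed.
End Gen.
Unset Implicit Arguments. Set Strict Implicit.

Lemma setC_eq (K : nat) (a b : {set 'I_K}) : (~: a == b) = (a == ~: b).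
Proof. by apply/eqP/eqP => [<-|->]; rewrite setCK. Qed.

Theorem theorem1
  (R : realType) (T : finType) (p : T -> R)
  (p_ge0 : forall t, 0 <= p t) (p_sum1 : \sum_(t : T) p t = 1)
  (K : nat) (HK : (2 <= K)%N) (N1 : nat)
  (QT AT RT : finType)
  (Om1 Om2 : T -> {set 'I_K}) (RS : T -> RT)
  (Q : 'I_N1 -> T -> QT) (A : 'I_N1 -> T -> AT)
  (* |Omega_2| is fixed (and publicly known) *)
  (m : nat) (Hm : forall t, 0 < p t -> #|Om2 t| = m)
  (* P_2 generates its queries (and Omega_2) without knowledge of (Omega_1, R_S) *)
  (Hqry : mutual_info p (fun t => ([ffun n => Q n t], Om2 t))
                        (fun t => (Om1 t, RS t)) = 0)
  (* answers are deterministic functions of the query, Omega_1 and R_S *)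
  (Hans : forall n : 'I_N1,
     cond_entropy p (A n) (fun t => (Q n t, Om1 t, RS t)) = 0) :
  let W := fun t => [ffun k : 'I_K => k \in Om1 t] in
  let Om := fun t => ~: Om2 t in
  let QA := fun t => ([ffun n => Q n t], [ffun n => A n t]) in
  ( (* (i) PSU reliability *)
    (forall P2 : {set 'I_K}, 0 < Pr p [pred t | Om2 t == P2] ->
       cond_entropy (condp p [pred t | Om2 t == P2])
         (fun t => Om1 t :|: Om2 t) (fun t => (QA t, Om2 t)) = 0)
    (* (ii) P_2 privacy *)
    /\ (forall n : 'I_N1,
       mutual_info p Om2 (fun t => (Q n t, A n t, Om1 t, RS t)) = 0)
    (* (iii) P_1 privacy *)
    /\ (forall P2 : {set 'I_K}, 0 < Pr p [pred t | Om2 t == P2] ->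
       mutual_info (condp p [pred t | Om2 t == P2])
         (fun t => restr (Om2 t) (W t)) (fun t => (QA t, Om2 t)) = 0) )
  <->
  ( (* (i') MM-SPIR reliability *)
    (forall P : {set 'I_K}, 0 < Pr p [pred t | Om t == P] ->
       cond_entropy (condp p [pred t | Om t == P])
         (fun t => restr P (W t)) (fun t => (QA t, Om t)) = 0)
    (* (ii') user privacy *)
    /\ (forall n : 'I_N1,
       mutual_info p Om (fun t => (Q n t, A n t, W t, RS t)) = 0)
    (* (iii') database privacy *)
    /\ (forall P : {set 'I_K}, 0 < Pr p [pred t | Om t == P] ->
       mutual_info (condp p [pred t | Om t == P])
         (fun t => restr (~: P) (W t)) (fun t => (QA t, Om t)) = 0) ).
Proof.
move=> W Om QA.
have hY : forall p', sameP p' (fun t => (QA t, Om2 t)) (fun t => (QA t, Om t)).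
  by move=> q a b ha hb; rewrite !xpair_eqE /Om (inj_eq (@setC_inj _)).
have hW : forall t t', (W t' == W t) = (Om1 t' == Om1 t).
  move=> a b; rewrite /W; apply/eqP/eqP => [h|->] //; apply/setP => k.
  by move/ffunP: h => /(_ k); rewrite !ffunE.
have E1 : forall P P2 (E : pred T), P = ~: P2 -> (forall t, E t = (Om2 t == P2)) ->
   cond_entropy (condp p E) (fun t => Om1 t :|: Om2 t) (fun t => (QA t, Om2 t)) =
   cond_entropy (condp p E) (fun t => restr P (W t)) (fun t => (QA t, Om t)).
  move=> P P2 E -> hE; apply: ce_same; last exact: hY.
  move=> a b /condp_supp; rewrite hE => /eqP -> /condp_supp; rewrite hE => /eqP ->.
  apply/eqP/eqP => h.
  - apply/ffunP => k; rewrite !ffunE in_setC; case: ifP => // kP; congr Some.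
    move/setP: h => /(_ k); rewrite !inE (negbTE kP) !orbF.
    by rewrite /W ?ffunE.
  - apply/setP => k; rewrite !inE; move/ffunP: h => /(_ k); rewrite !ffunE in_setC.
    case: (k \in P2) => /=; first by rewrite !orbT.
    by rewrite /W ?ffunE !orbF => -[].
have E3 : forall P P2 (E : pred T), P = ~: P2 -> (forall t, E t = (Om2 t == P2)) ->
   mutual_info (condp p E) (fun t => restr (Om2 t) (W t)) (fun t => (QA t, Om2 t)) =
   mutual_info (condp p E) (fun t => restr (~: P) (W t)) (fun t => (QA t, Om t)).
  move=> P P2 E -> hE; apply: mi_same; last exact: hY.
  move=> a b /condp_supp; rewrite hE => /eqP -> /condp_supp; rewrite hE => /eqP ->.
  by rewrite setCK.
have E2 : forall n : 'I_N1,
  mutual_info p Om2 (fun t => (Q n t, A n t, Om1 t, RS t)) =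
  mutual_info p Om (fun t => (Q n t, A n t, W t, RS t)).
  move=> n; apply: mi_same => a b ha hb.
    by rewrite /Om (inj_eq (@setC_inj _)).
  by rewrite !xpair_eqE hW.
split=> -[h1 [h2 h3]]; (split; [|split]).
- move=> P hP.
  have eE : [pred t | Om t == P] =1 [pred t | Om2 t == ~: P].
    by move=> t; rewrite /= /Om setC_eq.
  rewrite (condp_ext p eE) -(E1 P (~: P)) ?setCK //.
  by apply: h1; rewrite -(Pr_ext p eE).
- by move=> n; rewrite -E2.
- move=> P hP.
  have eE : [pred t | Om t == P] =1 [pred t | Om2 t == ~: P].
    by move=> t; rewrite /= /Om setC_eq.
  rewrite (condp_ext p eE) -(E3 P (~: P)) ?setCK //.
  by apply: h3; rewrite -(Pr_ext p eE).
- move=> P2 hP.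
  have eE : [pred t | Om2 t == P2] =1 [pred t | Om t == ~: P2].
    by move=> t; rewrite /= /Om setC_eq setCK.
  rewrite (condp_ext p eE) (E1 (~: P2) P2) //.
  by apply: h1; rewrite -(Pr_ext p eE).
  by move=> t; rewrite /= /Om setC_eq setCK.
- by move=> n; rewrite E2.
- move=> P2 hP.
  have eE : [pred t | Om2 t == P2] =1 [pred t | Om t == ~: P2].
    by move=> t; rewrite /= /Om setC_eq setCK.
  rewrite (condp_ext p eE) (E3 (~: P2) P2) //.
  by apply: h3; rewrite -(Pr_ext p eE).
  by move=> t; rewrite /= /Om setC_eq setCK.
Qed.
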